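(* Let $p$ be a prime. There is exactly one numerical semigroup $S$ of genus $p+1$ that is both reflective and symmetric, namely $S=\langle 2,7\rangle$ if $p=2$, and $S=\langle \{p\}\cup\{p+2,p+3,\dots,2p-1\}\rangle$ if $p$ is odd.
   Context: A numerical semigroup is a submonoid $S$ of $(\mathbb{N}_0,+)$ with finite complement; its genus is the number of elements of $\mathbb{N}_0\setminus S$ and $\mathrm{F}(S)$ is its largest gap. $\langle A\rangle$ denotes the set of finite $\mathbb{N}_0$-linear combinations of elements of $A$. $S$ is symmetric if for every $z\in\mathbb{Z}$ exactly one of $z$ and $\mathrm{F}(S)-z$ lies in $S$. A numerical semigroup $S$ of genus $g\ge1$ is called reflective if for every $z\in\{0,1,\dots,g-1\}$ exactly one of $z$ and $z+g$ belongs to $S$. *)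

(* Defs.v *)
From mathcomp Require Import all_boot all_order all_algebra.
Set Implicit Arguments. Unset Strict Implicit. Unset Printing Implicit Defensive.

Definition is_numsg (S : pred nat) : Prop :=
  [/\ S 0, (forall a b, S a -> S b -> S (a + b)) &
      exists N, forall n, N <= n -> S n].

Definition genus (S : pred nat) (g : nat) : Prop :=
  exists N, (forall n, N <= n -> S n) /\ count (predC S) (iota 0 N) = g.

Definition is_frobenius (S : pred nat) (f : nat) : Prop :=
  ~~ S f /\ (forall n, f < n -> S n).

Definition memZ (S : pred nat) (z : int) : bool :=
  match z with Posz n => S n | Negz _ => false end.

Definition symmetric_ns (S : pred nat) : Prop :=
  exists f, is_frobenius S f /\
    forall z : int, memZ S z (+) memZ S (Posz f - z)%R.

Definition reflective (S : pred nat) : Prop :=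
  exists g, genus S g /\ 1 <= g /\ forall z, z < g -> S z (+) S (z + g).

Definition in_gen (A : seq nat) (n : nat) : Prop :=
  exists c : seq nat, size c = size A /\
    n = \sum_(i < size A) nth 0 c i * nth 0 A i.

(* Main.v *)
Require Import Defs.
From mathcomp Require Import all_boot all_order all_algebra.
From mathcomp Require Import zify.

Definition S0 (p n : nat) : bool :=
  [|| n == 0, n == p, (p + 2 <= n) && (n <= 2 * p) | 2 * p + 2 <= n].

Lemma count_iota_mono (a : pred nat) m n : m <= n ->
  count a (iota 0 m) <= count a (iota 0 n).
Proof.
move=> mn; rewrite -(subnKC mn) iotaD count_cat; exact: leq_addr.
Qed.

Lemma count_stable (S : pred nat) N M : (forall n, N <= n -> S n) -> N <= M ->
  count (predC S) (iota 0 M) = count (predC S) (iota 0 N).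
Proof.
move=> HN NM; rewrite -(subnKC NM) iotaD count_cat.
rewrite add0n; apply/eqP; rewrite -[X in _ == X]addn0 eqn_add2l; apply/eqP.
apply/eqP; rewrite -leqn0 leqNgt -has_count; apply/hasPn => x; rewrite mem_iota => /andP [h _] /=.
by rewrite HN.
Qed.

Lemma genus_uniq S g1 g2 : genus S g1 -> genus S g2 -> g1 = g2.
Proof.
move=> [N1 [H1 C1]] [N2 [H2 C2]].
rewrite -C1 -C2 -(@count_stable S N1 (maxn N1 N2) H1) ?leq_maxl //.
by rewrite -(@count_stable S N2 (maxn N1 N2) H2) ?leq_maxr.
Qed.

Lemma refl_count (S : pred nat) g : (forall z, z < g -> S z (+) S (z + g)) ->
  count (predC S) (iota 0 (g + g)) = g.
Proof.
move=> H; rewrite iotaD count_cat add0n.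
have -> : iota g g = map (addn g) (iota 0 g) by rewrite -iotaDl addn0.
rewrite count_map.
rewrite (@eq_in_count _ (preim (addn g) (predC S)) S).
  by rewrite addnC count_predC size_iota.
move=> x; rewrite mem_iota add0n => /andP [_ xg] /=.
by move: (H x xg); rewrite addnC; case: (S x); case: (S (g + x)).
Qed.

Lemma genus_refl_large (S : pred nat) g : genus S g ->
  (forall z, z < g -> S z (+) S (z + g)) -> forall n, g + g <= n -> S n.
Proof.
move=> [N [HN CN]] Hr n hn; apply/negPn/negP => Sn.
have h1 := @count_stable S N (maxn N n.+1) HN (leq_maxl _ _).
have h2 := @count_iota_mono (predC S) _ _ (leq_maxr N n.+1).
have h3 := @count_iota_mono (predC S) _ _ hn.
move: h2; rewrite -addn1 iotaD count_cat /= Sn => h2.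
rewrite refl_count // in h3. rewrite -addn1 in h1. rewrite h1 CN /= in h2. lia.
Qed.

Lemma mulS (S : pred nat) : S 0 -> (forall a b, S a -> S b -> S (a + b)) ->
  forall k m, S m -> S (k * m).
Proof. by move=> H0 Ha; elim=> [|k IH] m Sm //; rewrite mulSn; apply: Ha => //; apply: IH. Qed.

Lemma structure (p : nat) (hp : prime p) (S : pred nat) :
  [/\ is_numsg S, genus S p.+1, reflective S & symmetric_ns S] ->
  forall n, S n = S0 p n.
Proof.
move=> [[H0 Hadd _] Hg [g [Hg' [g1 Hr]]] [f [[Sf Hf] Hsym]]].
have p2 := prime_gt1 hp.
have eg := @genus_uniq S _ _ Hg' Hg. subst g.
have Hl := @genus_refl_large S _ Hg Hr.
have fl : f < p.+1 + p.+1.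
  by rewrite ltnNge; apply/negP => h; move: Sf; rewrite Hl.
have sym : forall z, z <= f -> S z (+) S (f - z).
  by move=> z zf; have := Hsym (Posz z); rewrite /= subzn.
have ef : f = 2 * p + 1.
  case: (ltnP f p) => hf.
    have := Hr p (ltnSn p); rewrite !Hf //; lia.
  case: (ltnP f (2 * p + 1)) => hf2; last by lia.
  have S2 : S (p + p.+1) by apply: Hf; lia.
  have nSp : ~~ S p by move: (Hr p (ltnSn p)); rewrite S2; case: (S p).
  have Sfp : S (f - p) by move: (sym p hf); rewrite (negbTE nSp).
  have := Hr (f - p) ltac:(lia).
  by rewrite Sfp Hf //; lia.
subst f.
have pal : forall z, z <= p -> S z -> S (p - z).
  move=> z zp Sz.
  have h1 : ~~ S (z + p.+1) by move: (Hr z ltac:(lia)); rewrite Sz.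
  move: (sym (z + p.+1) ltac:(lia)); rewrite (negbTE h1) /=.
  by rewrite (_ : 2 * p + 1 - (z + p.+1) = p - z) //; lia.
have Sp : S p by rewrite -(subn0 p); apply: pal.
have low : forall z, 0 < z < p -> ~~ S z.
  move=> a ha; apply/negP => Sa.
  have ex : exists m, (0 < m) && S m by exists a; rewrite Sa; lia.
  pose m := ex_minn ex.
  have [mpos Sm] : 0 < m /\ S m.
    by rewrite /m; case: ex_minnP => x /andP [] ? ? _.
  have mmin : forall k, 0 < k -> S k -> m <= k.
    by rewrite /m; case: ex_minnP => x _ H k k0 Sk; apply: H; rewrite k0.
  have ma : m < p by have := mmin a ltac:(lia) Sa; lia.
  have Skm := @mulS S H0 Hadd (p %/ m) m Sm.
  have Sr := pal _ (leq_trunc_div p m) Skm.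
  have er : p - p %/ m * m = p %% m by have := divn_eq p m; lia.
  rewrite er in Sr.
  have r0 : p %% m = 0.
    case: (posnP (p %% m)) => // r0.
    have := mmin _ r0 Sr; rewrite leqNgt ltn_mod mpos //.
  have : m %| p by rewrite /dvdn r0.
  case: (eqVneq m 1) => m1; last by move/(prime_nt_dvdP hp m1); lia.
  move: Sf; by rewrite -(muln1 (2 * p + 1)) -m1 (@mulS S).
move=> n.
case: (posnP n) => [->|n0]; first by rewrite H0.
case: (ltnP n p) => np.
  by rewrite (negbTE (low n ltac:(lia))) /S0; lia.
case: (ltnP p n) => np2; last by rewrite (_ : n = p) ?Sp /S0; lia.
case: (ltnP (2 * p + 2) n.+1) => nb.
  by rewrite Hl /S0 //; lia.
case: (ltnP n (p + 2)) => nc.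
  have -> : n = 0 + p.+1 by lia.
  by move: (Hr 0 ltac:(lia)); rewrite H0 /S0 /=; case: (S _); lia.
case: (ltnP n (2 * p + 1)) => nd.
  have -> : n = (n - p.+1) + p.+1 by lia.
  move: (Hr (n - p.+1) ltac:(lia)); rewrite (negbTE (low (n - p.+1) ltac:(lia))) /= => ->.
  rewrite /S0; lia.
have -> : n = 2 * p + 1 by lia.
by rewrite (negbTE Sf) /S0; lia.
Qed.

Lemma in_gen0 A : in_gen A 0.
Proof.
exists (nseq (size A) 0); rewrite size_nseq; split=> //.
by rewrite big1 // => i _; rewrite nth_nseq ltn_ord.
Qed.

Lemma in_genD A m n : in_gen A m -> in_gen A n -> in_gen A (m + n).
Proof.
move=> [c1 [s1 e1]] [c2 [s2 e2]].
exists (mkseq (fun i => nth 0 c1 i + nth 0 c2 i) (size A)); rewrite size_mkseq.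
split=> //; rewrite e1 e2 -big_split /=; apply: eq_bigr => i _.
by rewrite nth_mkseq // mulnDl.
Qed.

Lemma in_gen_mem A a : a \in A -> in_gen A a.
Proof.
move=> aA; have ia : index a A < size A by rewrite index_mem.
exists (mkseq (fun i => nat_of_bool (i == index a A)) (size A)).
rewrite size_mkseq; split=> //.
rewrite (bigD1 (Ordinal ia)) //= big1 ?addn0.
  by rewrite nth_mkseq // eqxx mul1n nth_index.
move=> i /eqP ne; rewrite nth_mkseq //.
case: eqP => // h; exfalso; apply: ne; exact: val_inj.
Qed.

Lemma in_gen_sub (S : pred nat) A : S 0 -> (forall a b, S a -> S b -> S (a + b)) ->
  all S A -> forall n, in_gen A n -> S n.
Proof.
move=> H0 Ha HA n [c [_ ->]].
apply: (big_ind S) => // i _; apply: mulS => //.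
by apply: (allP HA); rewrite mem_nth.
Qed.

Lemma S0_0 p : S0 p 0. Proof. by []. Qed.
Lemma S0_add p : 2 <= p -> forall a b, S0 p a -> S0 p b -> S0 p (a + b).
Proof. move=> hp a b; rewrite /S0; lia. Qed.

Lemma S0_gen2 n : S0 2 n -> in_gen [:: 2; 7] n.
Proof.
move=> h.
have g2 : in_gen [:: 2; 7] 2 by apply: in_gen_mem.
have ev : forall k, in_gen [:: 2; 7] (k * 2).
  elim=> [|k IH]; first exact: in_gen0.
  by rewrite mulSn; apply: in_genD.
case: (boolP (odd n)) => on.
  have -> : n = 7 + (n - 7) %/ 2 * 2.
    move: h; rewrite /S0 => h.
    have := divn_eq (n - 7) 2; have := modn2 (n - 7).
    have : odd (n - 7) = false.
      rewrite oddB; last by lia.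
      by rewrite on.
    move=> -> /= ->. lia.
  by apply: in_genD; [apply: in_gen_mem | apply: ev].
have -> : n = n %/ 2 * 2 by have := divn_eq n 2; rewrite modn2 (negbTE on) addn0.
exact: ev.
Qed.

Lemma S0_genodd p n : 2 < p -> S0 p n -> in_gen (p :: iota (p + 2) (p - 2)) n.
Proof.
move=> p3.
have gen : forall a, (a == p) || (p + 2 <= a <= 2 * p - 1) ->
    in_gen (p :: iota (p + 2) (p - 2)) a.
  move=> a ha; apply: in_gen_mem; rewrite inE mem_iota; lia.
elim: n {-2}n (leqnn n) => [|N IH] n hn hS.
  rewrite (_ : n = 0); [exact: in_gen0 | lia].
case: (n =P 0) => [->|n0]; first exact: in_gen0.
case: (boolP ((n == p) || (p + 2 <= n <= 2 * p - 1))) => hg; first exact: gen.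
case: (n =P 2 * p) => [->|n2].
  by rewrite mul2n -addnn; apply: in_genD; apply: gen; rewrite eqxx.
case: (n =P 3 * p + 1) => [->|n3].
  rewrite (_ : 3 * p + 1 = (p + 2) + (2 * p - 1)); last by lia.
  apply: in_genD; apply: gen; lia.
rewrite (_ : n = p + (n - p)); last by move: hS; rewrite /S0; lia.
apply: in_genD; first by apply: gen; rewrite eqxx.
apply: IH; move: hS; rewrite /S0; lia.
Qed.

Lemma S0_refl p : 2 <= p -> forall z, z < p.+1 -> S0 p z (+) S0 p (z + p.+1).
Proof. move=> hp z; rewrite /S0; lia. Qed.

Lemma S0_ok p : 2 <= p ->
  [/\ is_numsg (S0 p), genus (S0 p) p.+1, reflective (S0 p) & symmetric_ns (S0 p)].
Proof.
move=> hp; have hr := @S0_refl p hp.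
have gen : genus (S0 p) p.+1.
  exists (p.+1 + p.+1); split; first by move=> n; rewrite /S0; lia.
  exact: refl_count.
split=> //.
- split=> //; first exact: (@S0_add p hp).
  by exists (2 * p + 2) => n; rewrite /S0; lia.
- by exists p.+1; split.
exists (2 * p + 1); split.
  by split; [rewrite /S0; lia | move=> n; rewrite /S0; lia].
case=> n /=.
  case E: (Posz (2 * p + 1) - Posz n)%R => [m|m] /=.
    have em : m = 2 * p + 1 - n by lia.
    have : n <= 2 * p + 1 by lia.
    rewrite em /S0; lia.
  have : 2 * p + 1 < n by lia.
  rewrite /S0; lia.
case E: (Posz (2 * p + 1) - Negz n)%R => [m|m] /=.
  have : 2 * p + 1 < m by lia.
  rewrite /S0; lia.
lia.
Qed.

Theorem mainTheorem17 (p : nat) (hp : prime p) :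
  let A := if p == 2 then [:: 2; 7] else p :: iota (p + 2) (p - 2) in
  (exists S : pred nat,
      [/\ is_numsg S, genus S p.+1, reflective S & symmetric_ns S]) /\
  (forall S : pred nat,
      [/\ is_numsg S, genus S p.+1, reflective S & symmetric_ns S] ->
      forall n, S n <-> in_gen A n).
Proof.
move=> A; have p2 := prime_gt1 hp.
split; first by exists (S0 p); exact: S0_ok.
move=> S HS n; rewrite (@structure p hp S HS).
have hA : all (S0 p) A.
  rewrite /A; case: eqP => [->|np] //=.
  apply/andP; split; first by rewrite /S0; lia.
  apply/allP => x; rewrite mem_iota /S0; lia.
split.
  rewrite /A; case: eqP => [e|np].
    by subst p; apply: S0_gen2.
  by apply: S0_genodd; lia.
by apply: in_gen_sub => //; apply: (@S0_add p p2).
Qed.
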